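(* Let $H=T\cup C_n$ be a Halin graph whose outer cycle $C_n$ has even length $n$. Then $AT(H)=3$.
   Context: All graphs are finite and simple. A Halin graph $H=T\cup C_n$ is a plane graph obtained from a plane tree $T$ having no vertex of degree two and at least one vertex of degree at least three, by adding a cycle $C_n$ (the outer cycle) that connects all the leaves of $T$ in the cyclic order determined by the planar drawing of $T$. For a digraph $D$, an Eulerian subdigraph is a spanning subdigraph (a subset of the arcs, possibly empty) in which every vertex has indegree equal to outdegree; it is even or odd according to the parity of its number of arcs. The Alon–Tarsi number $AT(G)$ is the smallest integer $k$ such that $G$ has an orientation $D$ with maximum outdegree at most $k-1$ for which the numbers of even and odd Eulerian subdigraphs of $D$ differ. *)

(* Defs.v *)
From mathcomp Require Import all_boot.
Set Implicit Arguments. Unset Strict Implicit. Unset Printing Implicit Defensive.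

Section Defs.
Variable V : finType.

Definition simple_rel (e : rel V) := symmetric e /\ irreflexive e.

Definition deg (e : rel V) (v : V) : nat := #|[set u | e v u]|.

Definition is_tree (t : rel V) :=
  [/\ simple_rel t,
      (forall x y : V, connect t x y) &
      (forall (x : V) (p : seq V), uniq (x :: p) -> 2 <= size p ->
           ~~ cycle t (x :: p))].

(* rotation system of the tree t: for each v, rot v cyclically permutes
   the neighbours of v (single orbit) *)
Definition rotation_system (t : rel V) (rot : V -> V -> V) :=
  forall v : V,
    (forall u, t v u -> t v (rot v u)) /\
    (forall u w, t v u -> t v w -> exists k, iter k (rot v) u = w).

(* boundary walk of the plane tree (single face): dart (u,v) is followed by
   (v, rot v u) *)
Definition dart_step (rot : V -> V -> V) (d : V * V) : V * V :=
  (d.2, rot d.2 d.1).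

Definition leaf_order (t : rel V) (rot : V -> V -> V) (d0 : V * V) : seq V :=
  [seq x <- map snd (traject (dart_step rot) d0 (2 * #|V|.-1)) | deg t x == 1].

Definition cyc_adj (c : seq V) (x y : V) : bool :=
  [&& x \in c, y \in c & (y == next c x) || (x == next c y)].

(* G = T ∪ C where T is a plane tree with no vertex of degree 2 and one
   vertex of degree >= 3, and C is the cycle through its leaves in the
   cyclic order given by a planar drawing (rotation system) of T. *)
Definition halin_decomp (G : rel V) (t : rel V) (c : seq V) :=
  [/\ is_tree t,
      (forall v, deg t v != 2) /\ (exists v, 3 <= deg t v),
      uniq c /\ (forall v, (v \in c) = (deg t v == 1)),
      (exists rot, rotation_system t rot /\
         exists d0 : V * V, t d0.1 d0.2 /\ leaf_order t rot d0 = c) &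
      (forall x y, G x y = t x y || cyc_adj c x y)].

Definition is_orientation (G D : rel V) :=
  forall x y, (D x y -> G x y) /\ (G x y -> D x y = ~~ D y x).

Definition outdeg (D : rel V) (v : V) : nat := #|[set u | D v u]|.

Definition eulerian_sub (D : rel V) (S : {set V * V}) : bool :=
  (S \subset [set a : V * V | D a.1 a.2]) &&
  [forall v, #|[set a in S | a.1 == v]| == #|[set a in S | a.2 == v]|].

Definition n_even_eulerian (D : rel V) : nat :=
  #|[set S : {set V * V} | eulerian_sub D S & ~~ odd #|S|]|.
Definition n_odd_eulerian (D : rel V) : nat :=
  #|[set S : {set V * V} | eulerian_sub D S & odd #|S|]|.

Definition AT_good (G : rel V) (k : nat) :=
  exists D : rel V, [/\ is_orientation G D, (forall v, outdeg D v < k) &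
                        n_even_eulerian D != n_odd_eulerian D].

Definition AT_number_is (G : rel V) (k : nat) :=
  AT_good G k /\ (forall j, j < k -> ~ AT_good G j).
End Defs.

(* Main.v *)
Require Import Defs.
From mathcomp Require Import all_boot zify.
Set Implicit Arguments. Unset Strict Implicit. Unset Printing Implicit Defensive.

Section Tree.
Variable V : finType.
Variable t : rel V.
Hypothesis tsym : symmetric t.
Hypothesis tirr : irreflexive t.
Hypothesis tconn : forall x y : V, connect t x y.
Hypothesis tacyc : forall (x : V) (p : seq V), uniq (x :: p) -> 2 <= size p ->
           ~~ cycle t (x :: p).
Variable r : V.

Definition hP (v : V) (n : nat) := [exists s : n.-tuple V, path t r s && (last r s == v)].

Lemma hex v : exists n, hP v n.
Proof.
have /connectP [s ps ->] := tconn r v.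
exists (size s); apply/existsP; exists (in_tuple s); by rewrite /= ps eqxx.
Qed.

Definition h v := ex_minn (hex v).

Lemma h_r : h r = 0.
Proof.
rewrite /h; case: ex_minnP => m _ /(_ 0) H; apply/eqP; rewrite -leqn0; apply: H; apply/existsP.
by exists [tuple]; rewrite /= eqxx.
Qed.

Lemma h_step v : v != r -> exists u, t v u && (h u < h v).
Proof.
move=> vr; rewrite /h; case: ex_minnP => m /existsP [s /andP [ps /eqP ls]] mmin.
case/lastP: (tval s) ps ls (size_tuple s) => [|s' u'] /=.
  by move=> _ vr'; rewrite -vr' eqxx in vr.
rewrite rcons_path last_rcons size_rcons => /andP [ps' tu] <- <-.
exists (last r s'); rewrite tsym tu /=.
case: ex_minnP => k _ /(_ (size s')) ; rewrite ltnS; apply.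
by apply/existsP; exists (in_tuple s'); rewrite /= ps' eqxx.
Qed.

Definition par v := odflt v [pick u | t v u && (h u < h v)].

Lemma par_r : par r = r.
Proof. rewrite /par; case: pickP => //= u; by rewrite h_r ltn0 andbF. Qed.

Lemma par_prop v : v != r -> t v (par v) /\ h (par v) < h v.
Proof.
move=> vr; rewrite /par; case: pickP => [u /andP [] //|].
by case: (h_step vr) => u hu /(_ u); rewrite hu.
Qed.

Lemma reach_root v : exists a, iter a par v = r.
Proof.
move: {2}(h v) (leqnn (h v)) => n; elim: n v => [|n IH] v hv.
  exists 0 => /=; apply/eqP; apply: contraT => vr.
  by have [_] := par_prop vr; rewrite ltnNge (leq_trans hv).
case: (eqVneq v r) => [->|vr]; first by exists 0.
have [_ hp] := par_prop vr.
have [a ha] := IH (par v) (leq_trans (leq_trans hp hv) (leqnn _)).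
by exists a.+1; rewrite iterSr.
Qed.

Lemma iter_r a : iter a par r = r.
Proof. by elim: a => //= a ->; rewrite par_r. Qed.

Lemma path_fwd v n : (forall k, k < n -> iter k par v != r) ->
  path t v (traject par (par v) n).
Proof.
elim: n => [//|n IH] hk.
rewrite trajectSr rcons_path IH; last by move=> k kn; apply: hk; lia.
rewrite last_traject -iterSr iterS.
by case: (par_prop (hk n (ltnSn n))).
Qed.

Lemma path_bwd v n : (forall k, k < n -> iter k par v != r) ->
  path t (iter n par v) (rev (traject par v n)).
Proof.
elim: n => [//|n IH] hk.
rewrite trajectSr rev_rcons /= IH; last by move=> k kn; apply: hk; lia.
by rewrite tsym; case: (par_prop (hk n (ltnSn n))) => ->.
Qed.

Lemma uniq_traj (f : V -> V) x n :
  (forall k k', k < k' < n -> iter k f x != iter k' f x) -> uniq (traject f x n).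
Proof.
elim: n => [//|n IH] hk; rewrite trajectSr rcons_uniq IH ?andbT.
  apply/trajectP => -[k kn /eqP]; apply/negP; rewrite eq_sym; apply: hk; lia.
by move=> k k' kk; apply: hk; lia.
Qed.

Lemma tree_edge x y : t x y -> y = par x \/ x = par y.
Proof.
move=> txy.
case: (eqVneq y (par x)) => [->|ypx]; first by left.
case: (eqVneq x (par y)) => [->|xpy]; first by right.
exfalso.
have [a ha] := reach_root x; have [b hb] := reach_root y.
pose Q s := [exists i : 'I_s.+1, iter i par x == iter (s - i) par y].
have Qab : forall a b, iter a par x = iter b par y -> Q (a + b).
  move=> a' b' e; apply/existsP; exists (@Ordinal (a' + b').+1 a' (leq_addr b' a')).
  by rewrite /= addKn e.
have Qex : exists s, Q s by exists (a + b); apply: Qab; rewrite ha hb.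
case: (ex_minnP Qex) => s /existsP [i /eqP hi] smin.
set j := s - i in hi.
have mn : forall a b, iter a par x = iter b par y -> i + j <= a + b.
  move=> a' b' e; have := ltn_ord i; rewrite /j => ilt.
  rewrite subnKC; last by rewrite -ltnS.
  exact: smin (Qab _ _ e).
have {smin Qab Qex hi} : iter i par x = iter j par y by [].
move: (nat_of_ord i) j mn => {s}i j mn hi.
have nr1 : forall k, k < i -> iter k par x != r.
  move=> k ki; apply/negP => /eqP e.
  have : iter i par x = iter k par x by rewrite -(subnK (ltnW ki)) iterD e iter_r.
  rewrite hi => /esym /mn; lia.
have nr2 : forall k, k < j -> iter k par y != r.
  move=> k ki; apply/negP => /eqP e.
  have : iter j par y = iter k par y by rewrite -(subnK (ltnW ki)) iterD e iter_r.
  rewrite -hi => /mn; lia.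
have inj1 : forall k k', k < k' <= i -> iter k par x != iter k' par x.
  move=> k k' /andP [kk ki]; apply/negP => /eqP e.
  have : iter (i - k' + k) par x = iter j par y.
    by rewrite iterD e -iterD subnK.
  move/mn; lia.
have inj2 : forall k k', k < k' <= j -> iter k par y != iter k' par y.
  move=> k k' /andP [kk ki]; apply/negP => /eqP e.
  have : iter i par x = iter (j - k' + k) par y.
    by rewrite iterD e -iterD subnK.
  move/mn; lia.
have disj : forall k m, k <= i -> m < j -> iter k par x != iter m par y.
  move=> k m ki mj; apply/negP => /eqP /mn; lia.
have U : uniq (x :: (traject par (par x) i ++ rev (traject par y j))).
  rewrite -cat_cons -trajectS cat_uniq rev_uniq has_rev; apply/and3P; split.
  - by apply: uniq_traj => k k' kk; apply: inj1; lia.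
  - apply/hasPn => v /trajectP [m mj ->]; apply/trajectP => -[k ki /eqP].
    by apply/negP; rewrite eq_sym; apply: disj; lia.
  - by apply: uniq_traj => k k' kk; apply: inj2; lia.
have S : 1 < size (traject par (par x) i ++ rev (traject par y j)).
  rewrite size_cat size_rev !size_traject.
  case Ei: i hi => [|[|i']] hi; case Ej: j hi => [|[|j']] //= hi.
  - by rewrite hi tirr in txy.
  - by rewrite hi eqxx in xpy.
  - by rewrite hi eqxx in ypx.
have Cy : cycle t (x :: (traject par (par x) i ++ rev (traject par y j))).
  rewrite /= rcons_cat cat_path path_fwd // last_traject hi rcons_path path_bwd //=.
  case Ej: j => [|j'] /=; first by rewrite tsym.
  by rewrite rev_cons last_rcons tsym.
by move: (tacyc U S); rewrite Cy.
Qed.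
End Tree.

Lemma cardI1 (W : finType) (S : {set W}) a : #|S :&: [set a]| = (a \in S).
Proof.
case: (boolP (a \in S)) => aS.
  have -> : S :&: [set a] = [set a].
    by apply/setP => z; rewrite !inE; case: (eqVneq z a) => [->|]; rewrite ?aS ?andbT ?andbF.
  by rewrite cards1.
have -> : S :&: [set a] = set0.
  by apply/setP => z; rewrite !inE; case: (eqVneq z a) => [->|]; rewrite ?(negbTE aS) ?andbT ?andbF.
by rewrite cards0.
Qed.

Lemma cardI2 (W : finType) (S : {set W}) a b : a != b ->
  #|S :&: [set a; b]| = (a \in S) + (b \in S).
Proof.
move=> ab; rewrite setIUr -cardI1 -cardI1 -cardsUI.
have -> : (S :&: [set a]) :&: (S :&: [set b]) = set0.
  apply/setP => z; rewrite !inE; apply/negP => /andP [/andP [_ /eqP ->] /andP [_ /eqP e]].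
  by rewrite e eqxx in ab.
by rewrite cards0 addn0.
Qed.

Lemma path_const (W : eqType) (f : W -> W) (b : W -> bool) x s :
  path (frel f) x s -> (forall y, y \in x :: s -> b (f y) = b y) ->
  forall y, y \in s -> b y = b x.
Proof.
elim: s x => [//|z s IH] x /= /andP [/eqP fx ps] inv y.
rewrite inE => /orP [/eqP ->|ys].
  by rewrite -fx inv // inE eqxx.
rewrite (IH z ps) ?ys //; first by rewrite -fx inv // inE eqxx.
by move=> w wz; apply: inv; rewrite inE wz orbT.
Qed.

Lemma cyc_const (W : eqType) (c : seq W) (b : W -> bool) : uniq c ->
  (forall y, y \in c -> b (next c y) = b y) -> forall y z, y \in c -> z \in c -> b y = b z.
Proof.
case: c => [//|c0 s] uc inv y z.
have ps := cycle_next uc; rewrite /= in ps.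
have hc : forall w, w \in c0 :: s -> b w = b c0.
  move=> w; rewrite inE => /orP [/eqP -> //| ws].
  have inv' : forall v, v \in c0 :: rcons s c0 -> b (next (c0 :: s) v) = b v.
    move=> v; rewrite !inE mem_rcons !inE => vin; apply: inv; rewrite !inE.
    by move: vin; case: (v == c0).
  have wr : w \in rcons s c0 by rewrite mem_rcons inE ws orbT.
  exact: (path_const ps inv' wr).
by move=> yc zc; rewrite (hc y yc) (hc z zc).
Qed.

Lemma sum_card_rel (W : finType) (e : rel W) :
  \sum_v #|[set u | e v u]| = #|[set a : W * W | e a.1 a.2]|.
Proof.
rewrite -sum1_card.
rewrite (eq_bigr (fun v => \sum_(u | e v u) 1)); last first.
  by move=> v _; rewrite -sum1_card; apply: eq_bigl => u; rewrite inE.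
rewrite (pair_big_dep predT (fun v u => e v u) (fun _ _ => 1)) /=.
by apply: eq_bigl => -[a b]; rewrite inE.
Qed.

Section Halin.
Variables (V : finType) (H T : rel V) (C : seq V).
Hypothesis tsym : symmetric T.
Hypothesis tirr : irreflexive T.
Hypothesis tconn : forall x y : V, connect T x y.
Hypothesis tacyc : forall (x : V) (p : seq V), uniq (x :: p) -> 2 <= size p ->
           ~~ cycle T (x :: p).
Hypothesis deg2 : forall v, deg T v != 2.
Variable r : V.
Hypothesis degr : 3 <= deg T r.
Hypothesis uC : uniq C.
Hypothesis memC : forall v, (v \in C) = (deg T v == 1).
Hypothesis evC : ~~ odd (size C).
Hypothesis Hdef : forall x y, H x y = T x y || cyc_adj C x y.

Local Notation p := (par tconn r).
Local Notation hh := (h tconn r).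

Lemma pp x : x != r -> T x (p x) /\ hh (p x) < hh x.
Proof. exact: par_prop. Qed.

Lemma edge x y : T x y -> (x != r /\ y = p x) \/ (y != r /\ x = p y).
Proof.
move=> txy; case: (tree_edge tsym tirr tconn tacyc r txy) => e; [left|right]; split => //.
  by apply/negP => /eqP xr; move: txy; rewrite e xr par_r tirr.
by apply/negP => /eqP yr; move: txy; rewrite e yr par_r tirr.
Qed.

Lemma leaf_nb x a b : x \in C -> T x a -> T x b -> a = b.
Proof.
rewrite memC => /cards1P [w ew] ta tb.
have : a \in [set u | T x u] by rewrite inE.
have : b \in [set u | T x u] by rewrite inE.
by rewrite ew !inE => /eqP -> /eqP ->.
Qed.

Lemma r_notC : r \notin C.
Proof. by rewrite memC; apply/negP => /eqP e; move: degr; rewrite e. Qed.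

Lemma noTC x y : x \in C -> y \in C -> ~~ T x y.
Proof.
have key : forall x y, x \in C -> y \in C -> x != r -> y = p x -> False.
  move=> a b aC bC ar e.
  have br : b != r by apply/negP => /eqP br; move: r_notC; rewrite -br bC.
  have [tb hb] := pp br; have [ta ha] := pp ar.
  have e2 : p b = a by apply: (leaf_nb bC tb); rewrite tsym e.
  by move: hb ha; rewrite e2 -e; lia.
move=> xC yC; apply/negP => /edge [[xr e]|[yr e]].
  exact: (key x y).
exact: (key y x).
Qed.

Definition E2 := [set a : V * V | T a.1 a.2].

Lemma card_E2 : #|E2| = #|V|.-1 + #|V|.-1.
Proof.
pose A := [set (x, p x) | x in [set~ r]].
pose B := [set (p x, x) | x in [set~ r]].
have eU : E2 = A :|: B.
  apply/setP => -[x y]; rewrite !inE /=; apply/idP/orP.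
    move/edge => [[xr ->]|[yr ->]]; [left|right]; apply/imsetP.
      by exists x; rewrite // !inE.
    by exists y; rewrite // !inE.
  case=> /imsetP [z]; rewrite !inE => zr [-> ->]; have [tz _] := pp zr => //.
  by rewrite tsym.
have eI : A :&: B = set0.
  apply/setP => -[x y]; rewrite !inE; apply/negP => /andP [].
  move=> /imsetP [z]; rewrite !inE => zr [-> ->] /imsetP [w]; rewrite !inE => wr [e1 e2].
  have [_ hz] := pp zr; have [_ hw] := pp wr.
  by move: hz hw; rewrite e2 -e1; lia.
have cA : #|A| = #|V|.-1 by rewrite card_imset ?cardsC1 // => a b [].
have cB : #|B| = #|V|.-1 by rewrite card_imset ?cardsC1 // => a b [].
by have := cardsUI A B; rewrite eI cards0 addn0 -eU cA cB.
Qed.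

Lemma sizeC : 3 <= size C.
Proof.
have s1 : \sum_v deg T v = #|V|.-1 + #|V|.-1 by rewrite -card_E2 -sum_card_rel.
have s2 : \sum_v (if v \in C then 1 else 3) <= \sum_v deg T v.
  apply: leq_sum => v _; case: ifP => vC; first by move: vC; rewrite memC => /eqP ->.
  have : 0 < deg T v.
    case: (eqVneq v r) => [->|vr]; first by apply: leq_trans degr.
    by apply/card_gt0P; exists (p v); rewrite inE; case: (pp vr).
  by move: vC (deg2 v); rewrite memC; case: (deg T v) => [|[|[|]]].
rewrite (bigID (fun v => v \in C)) /= in s2.
rewrite (eq_bigr (P:= fun v => v \in C) (fun _ => 1)) in s2; last by move=> v ->.
rewrite (eq_bigr (P:= fun v => v \notin C) (fun _ => 3)) in s2; last by move=> v vC; rewrite (negbTE vC).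
rewrite !sum_nat_cond_const in s2.
have c1 : #|[set x | x \in C]| = size C.
  by rewrite -(card_uniqP uC); apply: eq_card => v; rewrite inE.
have c2 : #|[set x | x \notin C]| + size C = #|V|.
  rewrite -c1 addnC -(cardsC [set x | x \in C]); congr (_ + _).
  by apply: eq_card => v; rewrite !inE.
have c3 : 0 < #|[set x | x \notin C]| by apply/card_gt0P; exists r; rewrite inE r_notC.
have c4 : #|[set x | x \notin C]| = #|V| - size C by lia.
move: s2; rewrite s1 c1 c4; lia.
Qed.

Lemma nextC x : x \in C -> next C x != x /\ next C (next C x) != x.
Proof.
move=> xC; case: (rot_to xC) => i s e.
have uR : uniq (rot i C) by rewrite rot_uniq.
have sz : 2 <= size s.
  by have := size_rot i C; rewrite e /= => es; move: sizeC; rewrite -es.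
rewrite -!(next_rot i uC) e.
move: uR sz; rewrite e; case: s {e} => [|a [|b s]] //= /andP [].
rewrite !inE !negb_or => /and3P [xa xb _] /andP [/andP [ab _] _] _.
rewrite eqxx eq_sym (negbTE xa) /= eqxx; split => //.
by rewrite eq_sym.
Qed.

Definition D0 x y := (x \in C) && (y == next C x) || (x != r) && (y == p x).

Lemma D0_par x : x != r -> D0 x (p x) /\ ~~ D0 (p x) x.
Proof.
move=> xr; have [tx hx] := pp xr; split; first by rewrite /D0 xr eqxx orbT.
apply/negP => /orP [/andP [pC /eqP ex]|/andP [pr /eqP ex]].
  have xC : x \in C by rewrite ex mem_next.
  by move: (noTC xC pC); rewrite tx.
have [_ hp] := pp pr; move: hx hp; rewrite -ex; lia.
Qed.

Lemma D0_cyc x y : x \in C -> y \in C -> D0 x y = (y == next C x).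
Proof.
move=> xC yC; rewrite /D0 xC /=; case: (y == next C x) => //=.
apply/negP => /andP [xr /eqP e]; have [tx _] := pp xr.
by move: (noTC xC yC); rewrite e tx.
Qed.

Lemma D0_orient : is_orientation H D0.
Proof.
move=> x y; split.
  rewrite Hdef; case/orP => [/andP [xC /eqP ->]|/andP [xr /eqP ->]].
    by rewrite /cyc_adj xC mem_next xC eqxx orbT.
  by case: (pp xr) => ->.
rewrite Hdef; case/orP => [txy | /and3P [xC yC e]].
  case: (edge txy) => [[xr ->]|[yr ->]].
    by have [d nd] := D0_par xr; rewrite d (negbTE nd).
  by have [d nd] := D0_par yr; rewrite d (negbTE nd).
rewrite !D0_cyc //.
have [n1 n2] := nextC xC; have [m1 m2] := nextC yC.
case/orP: e => /eqP ->; first by rewrite eqxx eq_sym (negbTE n2).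
by rewrite eqxx eq_sym (negbTE m2).
Qed.

Lemma D0_outdeg v : outdeg D0 v < 3.
Proof.
apply: (@leq_ltn_trans #|[set next C v; p v]|); last by rewrite cards2; case: (_ != _).
apply: subset_leq_card; apply/subsetP => u; rewrite !inE.
by case/orP => /andP [_ ->]; rewrite ?orbT.
Qed.

Definition CP := [set (x, next C x) | x in C].

Lemma card_CP : #|CP| = size C.
Proof.
rewrite card_in_imset; first by apply/card_uniqP.
by move=> a b _ _ [].
Qed.

Lemma euler_even S : eulerian_sub D0 S -> ~~ odd #|S|.
Proof.
case/andP => sub /forallP bal.
have inD : forall u v, (u, v) \in S -> D0 u v.
  by move=> u v uvS; have := subsetP sub _ uvS; rewrite inE.
pose b x := (x, next C x) \in S.
pose tt x := (x, p x) \in S.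
have step1 : forall x, x \in C -> b (prev C x) = b x + tt x :> nat.
  move=> x xC.
  have xr : x != r by apply/negP => /eqP e; move: r_notC; rewrite -e xC.
  have [tx hx] := pp xr.
  have np : (x, next C x) != (x, p x).
    rewrite xpair_eqE eqxx /=; apply/negP => /eqP e.
    have nC : next C x \in C by rewrite mem_next.
    by move: (noTC xC nC); rewrite e tx.
  have eo : [set a in S | a.1 == x] = S :&: [set (x, next C x); (x, p x)].
    apply/setP => -[u v]; rewrite !inE !xpair_eqE /=.
    case: (boolP ((u, v) \in S)) => //= uvS.
    case: (eqVneq u x) => [eu|] //=; subst u.
    by case/orP: (inD _ _ uvS) => /andP [_ ->]; rewrite ?orbT.
  have ei : [set a in S | a.2 == x] = S :&: [set (prev C x, x)].
    apply/setP => -[u v]; rewrite !inE !xpair_eqE /=.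
    case: (boolP ((u, v) \in S)) => //= uvS.
    case: (eqVneq v x) => [ev|]; rewrite ?andbT ?andbF //; subst v.
    case/orP: (inD _ _ uvS) => /andP [uC' /eqP ex].
      by rewrite ex prev_next // eqxx.
    have [tu hu] := pp uC'.
    have eu : u = p x by apply: (leaf_nb xC) => //; rewrite tsym ex.
    by move: hu hx; rewrite -ex eu; lia.
  have := eqP (bal x); rewrite eo ei cardI2 // cardI1.
  by rewrite /b next_prev.
have sumb : \sum_(x in C) b (prev C x) = \sum_(x in C) b x.
  rewrite [RHS](reindex_inj (can_inj (next_prev uC))) /=.
  by apply: eq_bigl => x; rewrite mem_prev.
have tt0 : forall x, x \in C -> tt x = false.
  have : \sum_(x in C) tt x == 0.
    move: sumb; rewrite (eq_bigr (fun x => b x + tt x)); last by move=> x; apply: step1.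
    by rewrite big_split /=; lia.
  rewrite sum_nat_eq0 => /forallP al x xC.
  by have := al x; rewrite xC /=; case: (tt x).
have tt1 : forall w, w != r -> tt w = false.
  move=> w0 w0r; apply/negP => tw0.
  have Pw0 : (w0 != r) && tt w0 by rewrite w0r tw0.
  case: (@arg_maxnP _ w0 (fun w => (w != r) && tt w) hh Pw0) => w /andP [wr tw] wmax.
  have : 0 < #|[set a in S | a.1 == w]|.
    by apply/card_gt0P; exists (w, p w); rewrite inE /= eqxx andbT; exact: tw.
  rewrite (eqP (bal w)) => /card_gt0P [[u v]]; rewrite inE /= => /andP [uvS /eqP ev].
  subst v; case/orP: (inD _ _ uvS) => /andP [uC' /eqP ew].
    have wC : w \in C by rewrite ew mem_next.
    by rewrite tt0 in tw.
  have Pu : (u != r) && tt u by rewrite uC' /tt -ew uvS.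
  have := wmax u Pu; have [_ hu] := pp uC'; rewrite -ew in hu; lia.
have sub2 : S \subset CP.
  apply/subsetP => -[u v] uvS; case/orP: (inD _ _ uvS) => /andP [uC' /eqP ev].
    by rewrite ev; apply/imsetP; exists u.
  by move: (tt1 u uC'); rewrite /tt -ev uvS.
have bcon : forall y, y \in C -> b (next C y) = b y.
  move=> y yC; have nC : next C y \in C by rewrite mem_next.
  have := step1 _ nC; rewrite prev_next // tt0 // addn0.
  by case: (b y); case: (b (next C y)).
case: (set_0Vmem S) => [-> | [a aS]]; first by rewrite cards0.
case/imsetP: (subsetP sub2 _ aS) => x0 x0C ea.
have bx0 : b x0 by rewrite /b -ea.
have -> : S = CP.
  apply/eqP; rewrite eqEsubset sub2; apply/subsetP => ? /imsetP [y yC ->].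
  by rewrite -/(b y) (cyc_const uC bcon yC x0C).
by rewrite card_CP.
Qed.

Lemma Hsym : symmetric H.
Proof.
move=> x y; rewrite !Hdef (tsym x y) /cyc_adj; congr (_ || _).
by case: (x \in C); case: (y \in C); rewrite //= orbC.
Qed.

Lemma no_low D : is_orientation H D -> (forall v, outdeg D v <= 1) -> False.
Proof.
move=> oD od.
pose AD := [set a : V * V | D a.1 a.2].
pose AH := [set a : V * V | H a.1 a.2].
have c1 : #|AD| <= #|V|.
  rewrite -sum_card_rel; apply: (@leq_trans (\sum_(v : V) 1)).
    by apply: leq_sum => v _; apply: od.
  by rewrite sum1_card.
have c2 : #|AH| = #|AD| + #|AD|.
  pose B := [set (a.2, a.1) | a in AD].
  have eU : AH = AD :|: B.
    apply/setP => -[x y]; rewrite !inE /=; apply/idP/orP.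
      move=> hxy; have [_ e] := oD x y; move: (e hxy).
      case: (boolP (D x y)) => dxy ed; [by left| right].
      move: ed => /esym/negbFE dyx; apply/imsetP; exists (y, x); by rewrite ?inE.
    case => [dxy|/imsetP [[u v]]]; first by case: (oD x y) => h _; apply: h.
    rewrite inE /= => duv [-> ->]; rewrite Hsym; by case: (oD u v) => h _; apply: h.
  have eI : AD :&: B = set0.
    apply/setP => -[x y]; rewrite !inE /=; apply/negP => /andP [dxy /imsetP [[u v]]].
    rewrite inE /= => duv [ex ey]; subst x y.
    have [h e] := oD v u; move: (e (h dxy)); by rewrite dxy duv.
  have cB : #|B| = #|AD| by rewrite card_imset // => -[a b] [c d] [-> ->].
  by have := cardsUI AD B; rewrite eI cards0 addn0 -eU cB.
have c3 : #|E2| + #|CP| <= #|AH|.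
  have eI : E2 :&: CP = set0.
    apply/setP => -[x y]; rewrite !inE /=; apply/negP => /andP [txy /imsetP [z zC [ex ey]]].
    subst x y; have nC : next C z \in C by rewrite mem_next.
    by move: (noTC zC nC); rewrite txy.
  rewrite -cardsUI eI cards0 addn0.
  apply: subset_leq_card; apply/subsetP => -[x y]; rewrite !inE /= Hdef.
  case/orP => [-> //|/imsetP [z zC [-> ->]]].
  by rewrite /cyc_adj zC mem_next zC eqxx orbT.
move: c3; rewrite c2 card_E2 card_CP; have := sizeC; lia.
Qed.

Lemma D0_good : AT_good H 3.
Proof.
exists D0; split; [exact: D0_orient | exact: D0_outdeg |].
have o0 : n_odd_eulerian D0 = 0.
  apply/eqP; rewrite cards_eq0; apply/eqP/setP => S; rewrite !inE.
  by apply/negP => /andP [/euler_even /negbTE ->].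
have e1 : 0 < n_even_eulerian D0.
  apply/card_gt0P; exists set0; rewrite !inE cards0 /= andbT.
  rewrite /eulerian_sub sub0set /=; apply/forallP => v.
  have e : forall P : pred (V * V), [set a in (set0 : {set V * V}) | P a] = set0.
    by move=> P; apply/setP => a; rewrite !inE.
  by rewrite !e.
by rewrite o0 -lt0n.
Qed.
End Halin.

Theorem lemma3p4 (V : finType) (H T : rel V) (C : seq V) :
  halin_decomp H T C -> ~~ odd (size C) -> AT_number_is H 3.
Proof.
move=> [[[tsym tirr] tconn tacyc] [deg2 [r degr]] [uC memC] _ Hdef] evC.
split; first exact: (D0_good tsym tirr tconn tacyc deg2 degr uC memC evC Hdef).
move=> j hj [D [oD odD _]].
apply: (no_low tsym tirr tconn tacyc deg2 degr uC memC evC Hdef oD) => v.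
by have := odD v; lia.
Qed.
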